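(* Let $\lambda, r, k$ be positive integers. Let $s_k(n,b)$ be the number of $r$-canonical secondary structures with minimum arc-length $\lambda$ on $n$ vertices having exactly $b$ rainbows of length $k$, and let $\mathbf{S}_k(x,u)=\sum_{n,b}s_k(n,b)x^nu^b$. Then $$\mathbf{S}_k(x,u)=\frac{1}{1-\mathbf{F}(x)-(u-1)f(k+1)x^{k+1}},$$ where $f(m)$ is the number of irreducible such structures on $m$ vertices and $\mathbf{F}(x)=\sum_{m\ge1}f(m)x^m$.
   Context: A diagram on $n$ vertices $1,\dots,n$ ($n\ge0$) is a set of arcs $(i,j)$ with $1\le i<j\le n$ such that no two arcs share an endpoint and no two arcs cross (there are no arcs $(i_1,j_1),(i_2,j_2)$ with $i_1<i_2<j_1<j_2$). The length of an arc $(i,j)$ is $j-i$. A stack is a maximal sequence of arcs $(i,j),(i+1,j-1),\dots,(i+s-1,j-s+1)$ of the diagram; $s$ is its length. An $r$-canonical secondary structure with minimum arc-length $\lambda$ is a diagram in which every arc has length at least $\lambda$ and every stack has length at least $r$ (the empty structure on $0$ vertices is counted). A rainbow is an arc $(i,j)$ maximal for the partial order $(i,j)\preceq(i',j')\iff i'\le i<j\le j'$. A structure is irreducible if it is the single vertex with no arcs ($n=1$) or it contains the arc $(1,n)$. *)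

(* Defs.v *)
From mathcomp Require Import all_boot all_order all_algebra.
Set Implicit Arguments. Unset Strict Implicit. Unset Printing Implicit Defensive.
Import GRing.Theory.

(* Vertices 1..n are encoded 0-based as elements of 'I_n (vertex v+1 <-> v).
   A diagram on n vertices is a set A of pairs (i,j) in 'I_n * 'I_n. *)

Section Diagrams.
Variable n : nat.
Implicit Type A : {set 'I_n * 'I_n}.

Definition arc A (i j : nat) : bool :=
  [exists a in A, (val a.1 == i) && (val a.2 == j)].

Definition is_diagram A : bool :=
  [forall a in A, val a.1 < val a.2] &&
  [forall a in A, forall a' in A, (a != a') ==>
     [&& a.1 != a'.1, a.1 != a'.2, a.2 != a'.1 & a.2 != a'.2]] &&
  [forall a in A, forall a' in A,
     ~~ [&& val a.1 < val a'.1, val a'.1 < val a.2 & val a.2 < val a'.2]].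

Definition min_arc_length (lam : nat) A : bool :=
  [forall a in A, lam <= val a.2 - val a.1].

Definition is_stack A (i j s : nat) : bool :=
  [&& 0 < s, [forall t : 'I_s, arc A (i + t) (j - t)],
      (0 < i) ==> ~~ arc A i.-1 j.+1 & ~~ arc A (i + s) (j - s)].

(* every stack has length at least r.  A stack starting at arc (i,j) has
   i, j < n and length s <= n, so quantifying over i j : 'I_n and
   s : 'I_n.+1 ranges over all stacks. *)
Definition r_canonical (r : nat) A : bool :=
  [forall i : 'I_n, forall j : 'I_n, forall s : 'I_n.+1,
     is_stack A i j s ==> (r <= s)].

Definition sec_str (lam r : nat) A : bool :=
  [&& is_diagram A, min_arc_length lam A & r_canonical r A].

Definition rainbow A (a : 'I_n * 'I_n) : bool :=
  (a \in A) &&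
  [forall a' in A, ((val a'.1 <= val a.1) && (val a.2 <= val a'.2)) ==> (a' == a)].

Definition nrainbows (k : nat) A : nat :=
  #|[set a in A | rainbow A a && (val a.2 - val a.1 == k)]|.

Definition irreducible A : bool := ((n == 1) && (A == set0)) || arc A 0 n.-1.

End Diagrams.

Definition s_count (lam r k n b : nat) : nat :=
  #|[set A : {set 'I_n * 'I_n} |
       sec_str lam r A && (nrainbows k A == b)]|.

Definition f_count (lam r m : nat) : nat :=
  #|[set A : {set 'I_m * 'I_m} | sec_str lam r A && irreducible A]|.

Local Open Scope ring_scope.

(* Bivariate series are elements of {poly {poly int}}: outer variable x,
   inner variable u.  Truncations at x-degree N: *)
Definition uvar : {poly {poly int}} := ('X : {poly int})%:P.

Definition S_trunc (lam r k N : nat) : {poly {poly int}} :=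
  \sum_(n < N.+1) \sum_(b < n.+1)
     ((s_count lam r k n b)%:R *: ('X^b : {poly int}))%:P * 'X^n.

Definition F_trunc (lam r N : nat) : {poly {poly int}} :=
  \sum_(1 <= m < N.+1) (f_count lam r m)%:R * 'X^m.

(* Main.v *)
Require Import Defs.
From mathcomp Require Import all_boot all_order all_algebra zify ring.
From Stdlib Require Import FunctionalExtensionality.
Import Defs.
Set Implicit Arguments. Unset Strict Implicit. Unset Printing Implicit Defensive.
Import GRing.Theory.

Section Basic.
Variable n : nat.
Implicit Type A : {set 'I_n * 'I_n}.

Lemma arcP A x y :
  reflect (exists2 a : 'I_n * 'I_n, (a \in A) & (val a.1 = x /\ val a.2 = y)) (arc A x y).
Proof.
apply: (iffP existsP) => [[a /andP[aA /andP[/eqP h1 /eqP h2]]]|[a aA [h1 h2]]].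
  by exists a.
by exists a; rewrite aA h1 h2 !eqxx.
Qed.

Lemma arc_in A (a : 'I_n * 'I_n) : arc A a.1 a.2 = (a \in A).
Proof.
apply/arcP/idP => [[b bA [h1 h2]]|aA]; last by exists a.
suff -> : a = b by [].
case: a b h1 h2 {bA} => [a1 a2] [b1 b2] /= h1 h2.
by rewrite (val_inj h1) (val_inj h2).
Qed.

Lemma arc_bound A x y : arc A x y -> x < n /\ y < n.
Proof. by case/arcP=> a _ [<- <-]; split; apply: ltn_ord. Qed.

Lemma arc_ext A A' : (forall x y, arc A x y = arc A' x y) -> A = A'.
Proof. by move=> h; apply/setP => a; rewrite -!arc_in h. Qed.

End Basic.

Definition diagR (R : nat -> nat -> bool) :=
  [/\ forall x y, R x y -> x < y,
      forall x y x' y', R x y -> R x' y' ->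
        [|| x == x', x == y', y == x' | y == y'] -> x = x' /\ y = y' &
      forall x y x' y', R x y -> R x' y' -> ~~ [&& x < x', x' < y & y < y']].
Definition minR lam (R : nat -> nat -> bool) := forall x y, R x y -> lam <= y - x.
Definition is_stackR (R : nat -> nat -> bool) (i j s : nat) : bool :=
  [&& 0 < s, [forall t : 'I_s, R (i + t) (j - t)],
      (0 < i) ==> ~~ R i.-1 j.+1 & ~~ R (i + s) (j - s)].
Definition rcanR r (R : nat -> nat -> bool) := forall i j s, is_stackR R i j s -> r <= s.
Definition secR lam r R := [/\ diagR R, minR lam R & rcanR r R].

Lemma stack_head R i j s : is_stackR R i j s -> R i j.
Proof.
case/and4P=> s0 /forallP /(_ (Ordinal s0)) /=; by rewrite addn0 subn0.
Qed.

Lemma sec_strP lam r n (A : {set 'I_n * 'I_n}) :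
  sec_str lam r A <-> secR lam r (arc A).
Proof.
split.
  rewrite /sec_str /is_diagram /min_arc_length /r_canonical.
  case/and3P => /andP[/andP[/forall_inP H1 /forall_inP H2] /forall_inP H3]
     /forall_inP Hm /forallP Hr.
  split; [split| |].
  - by move=> x y /arcP[a aA [<- <-]]; apply: H1.
  - move=> x y x' y' /arcP[a aA [<- <-]] /arcP[a' a'A [<- <-]] h.
    case: (eqVneq a a') => [-> //|ne].
    move: (H2 a aA) => /forall_inP /(_ a' a'A) /implyP /(_ ne).
    rewrite -!val_eqE /= => /and4P[n1 n2 n3 n4]; move: h.
    by rewrite (negPf n1) (negPf n2) (negPf n3) (negPf n4).
  - move=> x y x' y' /arcP[a aA [<- <-]] /arcP[a' a'A [<- <-]].
    by move: (H3 a aA) => /forall_inP /(_ a' a'A).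
  - by move=> x y /arcP[a aA [<- <-]]; apply: Hm.
  - move=> i j s hs.
    have [hi hj] := arc_bound (stack_head hs).
    have s0 : 0 < s by case/and4P: hs.
    have hsn : s < n.+1.
      have hs1 : s.-1 < s by lia.
      case/and4P: hs => _ /forallP /(_ (Ordinal hs1)) /= /arc_bound [h _] _ _.
      lia.
    by move: (Hr (Ordinal hi)) => /forallP /(_ (Ordinal hj)) /forallP
      /(_ (Ordinal hsn)) /implyP /(_ hs).
case=> [[D1 D2 D3] Hm Hr].
rewrite /sec_str /is_diagram /min_arc_length /r_canonical.
apply/and3P; split.
- apply/andP; split; [apply/andP; split|].
  + by apply/forall_inP => a aA; apply: D1; rewrite arc_in.
  + apply/forall_inP => a aA; apply/forall_inP => a' a'A; apply/implyP => ne.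
    rewrite -!val_eqE /=.
    apply/negP => /negP; rewrite !negb_and !negbK => h.
    have [e1 e2] := D2 _ _ _ _ (introT idP (etrans (arc_in A a) aA))
                          (introT idP (etrans (arc_in A a') a'A)) h.
    move/negP: ne; apply; apply/eqP.
    case: a a' e1 e2 {aA a'A h} => [a1 a2] [b1 b2] /= e1 e2.
    by congr pair; apply: val_inj.
  + apply/forall_inP => a aA; apply/forall_inP => a' a'A.
    by apply: D3; rewrite arc_in.
- by apply/forall_inP => a aA; apply: Hm; rewrite arc_in.
- apply/forallP => i; apply/forallP => j; apply/forallP => s; apply/implyP.
  exact: Hr.
Qed.
Definition Rcat (RB RC : nat -> nat -> bool) j x y :=
  if y < j then RB x y else (j <= x) && RC (x - j) (y - j).

Section Cat.
Variables (RB RC : nat -> nat -> bool) (j : nat).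
Hypothesis RBb : forall x y, RB x y -> x < j /\ y < j.
Hypothesis j0 : 0 < j.
Local Notation RA := (Rcat RB RC j).

Lemma RBf x y : j <= y -> RB x y = false.
Proof. by move=> h; apply/negbTE/negP => /RBb [_]; rewrite ltnNge h. Qed.

Lemma RBf1 x y : j <= x -> RB x y = false.
Proof. by move=> h; apply/negbTE/negP => /RBb [] ; rewrite ltnNge h. Qed.

Lemma Rcat_lo (HC0 : forall z, RC z 0 = false) x y : y <= j -> RA x y = RB x y.
Proof.
rewrite /Rcat; case: ltnP => // h1 h2.
have -> : y - j = 0 by lia.
by rewrite HC0 andbF RBf.
Qed.

Lemma Rcat_hi a b : RA (j + a) (j + b) = RC a b.
Proof. by rewrite /Rcat ltnNge leq_addr /= leq_addr /= !addKn. Qed.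

Lemma Rcat_hi2 (HC0 : forall z, RC z 0 = false) a b t :
  RA (j + a) (j + b - t) = RC a (b - t).
Proof.
case: (leqP t b) => h; first by rewrite -addnBA // Rcat_hi.
have -> : b - t = 0 by lia.
rewrite HC0 /Rcat.
have -> : j + b - t < j by lia.
by rewrite RBf1 // leq_addr.
Qed.

Lemma Rcat_cases x y : RA x y ->
  (RB x y /\ x < j /\ y < j) \/ exists a b, [/\ x = j + a, y = j + b & RC a b].
Proof.
rewrite /Rcat; case: ltnP => hy.
  by move=> h; left; have [? ?] := RBb h.
case/andP => hx h; right; exists (x - j), (y - j); split => //; lia.
Qed.

Lemma stack_B (HC0 : forall z, RC z 0 = false) x y s :
  y < j -> is_stackR RA x y s = is_stackR RB x y s.
Proof.
move=> hy; rewrite /is_stackR; congr [&& _, _, _ & _].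
- by apply: eq_forallb => t; rewrite Rcat_lo //; lia.
- by rewrite Rcat_lo.
- by rewrite Rcat_lo //; lia.
Qed.

Lemma stack_C (HC0 : forall z, RC z 0 = false) x y s :
  is_stackR RA (j + x) (j + y) s = is_stackR RC x y s.
Proof.
rewrite /is_stackR; congr [&& _, _, _ & _].
- by apply: eq_forallb => t; rewrite -addnA Rcat_hi2.
- case: x => [|x].
    rewrite addn0 j0 /=; apply/negP; rewrite /Rcat.
    have -> : (j + y).+1 < j = false by lia.
    have -> : j <= j.-1 = false by lia.
    by [].
  have -> : (j + x.+1).-1 = j + x by lia.
  have -> : (j + y).+1 = j + y.+1 by lia.
  by rewrite Rcat_hi /= addnS.
- by rewrite -addnA Rcat_hi2.
Qed.

Lemma stack_mid x y s : x < j -> j <= y -> is_stackR RA x y s = false.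
Proof.
move=> hx hy; apply/negbTE/negP => /stack_head.
by rewrite /Rcat ltnNge hy /= leqNgt hx.
Qed.

Lemma embedB x y : RB x y -> RA x y.
Proof. by move=> h; have [_ hy] := RBb h; rewrite /Rcat hy. Qed.

Lemma secR_cat_l lam r : secR lam r RA -> secR lam r RB /\ secR lam r RC.
Proof.
case=> [[D1 D2 D3] Hm Hr].
have HC0 : forall z, RC z 0 = false.
  move=> z; apply/negbTE/negP => h.
  by have := D1 (j + z) (j + 0); rewrite Rcat_hi => /(_ h); lia.
split.
  split; [split| |].
  - by move=> x y h; apply: D1; apply: embedB.
  - by move=> x y x' y' h h'; apply: D2; apply: embedB.
  - by move=> x y x' y' h h'; apply: D3; apply: embedB.
  - by move=> x y h; apply: Hm; apply: embedB.
  - move=> i jj s hs; case: (ltnP jj j) => hj.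
      by apply: (Hr i jj s); rewrite stack_B.
    by move/stack_head: hs; rewrite RBf.
split; [split| |].
- by move=> x y h; have := D1 (j + x) (j + y); rewrite Rcat_hi => /(_ h); lia.
- move=> x y x' y' h h' e.
  have := D2 (j + x) (j + y) (j + x') (j + y'); rewrite !Rcat_hi !eqn_add2l.
  by move=> /(_ h h' e) [? ?]; lia.
- move=> x y x' y' h h'.
  by have := D3 (j + x) (j + y) (j + x') (j + y'); rewrite !Rcat_hi !ltn_add2l => /(_ h h').
- by move=> x y h; have := Hm (j + x) (j + y); rewrite Rcat_hi subnDl => /(_ h).
- by move=> i jj s hs; apply: (Hr (j + i) (j + jj) s); rewrite stack_C.
Qed.

Lemma secR_cat_r lam r : secR lam r RB -> secR lam r RC -> secR lam r RA.
Proof.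
case=> [[B1 B2 B3] Bm Br] [[C1 C2 C3] Cm Cr].
have HC0 : forall z, RC z 0 = false.
  by move=> z; apply/negbTE/negP => /C1; lia.
split; [split| |].
- move=> x y /Rcat_cases [[h _]|[a [b [-> -> h]]]]; first exact: B1.
  by have := C1 _ _ h; lia.
- move=> x y x' y' /Rcat_cases [[h [hx hy]]|[a [b [-> -> h]]]]
                   /Rcat_cases [[h' [hx' hy']]|[a' [b' [-> -> h']]]] e.
  + exact: B2.
  + exfalso; lia.
  + exfalso; lia.
  + by rewrite !eqn_add2l in e; have [-> ->] := C2 _ _ _ _ h h' e.
- move=> x y x' y' /Rcat_cases [[h [hx hy]]|[a [b [-> -> h]]]]
                   /Rcat_cases [[h' [hx' hy']]|[a' [b' [-> -> h']]]].
  + exact: B3.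
  + apply/negP => /and3P[? ? ?]; lia.
  + apply/negP => /and3P[? ? ?]; lia.
  + by rewrite !ltn_add2l; apply: C3.
- move=> x y /Rcat_cases [[h _]|[a [b [-> -> h]]]]; first exact: Bm.
  by rewrite subnDl; apply: Cm.
- move=> i jj s hs; case: (ltnP jj j) => hj.
    by apply: (Br i jj s); rewrite -stack_B.
  case: (ltnP i j) => hi; first by rewrite stack_mid in hs.
  move: hs; rewrite -(subnKC hi) -(subnKC hj) stack_C //; exact: Cr.
Qed.

End Cat.
Definition rbP (R : nat -> nat -> bool) x y :=
  R x y /\ forall x' y', R x' y' -> x' <= x -> y <= y' -> x' = x /\ y' = y.
Definition rbb (R : nat -> nat -> bool) N x y :=
  R x y && [forall x' : 'I_N, forall y' : 'I_N,
     R x' y' ==> (x' <= x) ==> (y <= y') ==> (x' == x :> nat) && (y' == y :> nat)].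

Lemma rbbP (R : nat -> nat -> bool) N (x y : nat) : (forall x y, R x y -> x < N /\ y < N) ->
  reflect (rbP R x y) (rbb R N x y).
Proof.
move=> Rb; apply: (iffP andP) => [[h /forallP H]|[h H]]; split => //.
  move=> x' y' h' hx hy; have [bx by'] := Rb _ _ h'.
  move: (H (Ordinal bx)) => /forallP /(_ (Ordinal by')) /=.
  by rewrite h' hx hy /= => /andP[/eqP -> /eqP ->].
apply/forallP => x'; apply/forallP => y'; apply/implyP => h'; apply/implyP => hx.
apply/implyP => hy; have [-> ->] := H _ _ h' hx hy; by rewrite !eqxx.
Qed.

Lemma rainbowP n (A : {set 'I_n * 'I_n}) (a : 'I_n * 'I_n) :
  reflect (rbP (arc A) a.1 a.2) (rainbow A a).
Proof.
apply: (iffP andP) => [[aA /forall_inP H]|[h H]]; split.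
- by rewrite arc_in.
- move=> x' y' /arcP [a' a'A [<- <-]] hx hy.
  by move: (H a' a'A); rewrite hx hy /= => /eqP ->.
- by rewrite -arc_in.
- apply/forall_inP => a' a'A; apply/implyP => /andP[hx hy].
  have [e1 e2] := H _ _ (introT idP (etrans (arc_in A a') a'A)) hx hy.
  apply/eqP; case: a a' e1 e2 {h H a'A hx hy} => [a1 a2] [b1 b2] /= e1 e2.
  by rewrite (val_inj e1) (val_inj e2).
Qed.

Lemma nr_sum k n (A : {set 'I_n * 'I_n}) :
  nrainbows k A = \sum_(x < n) \sum_(y < n) (rbb (arc A) n x y && (y - x == k)).
Proof.
rewrite /nrainbows -sum1_card big_mkcond /= pair_big /=.
apply: eq_bigr => -[x y] _ /=; rewrite inE.
rewrite andbA.
have -> : ((x, y) \in A) && rainbow A (x, y) = rbb (arc A) n x y.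
  rewrite andb_idl; last by case/andP.
  apply/idP/idP.
    by move/rainbowP => h; apply/rbbP => //; exact: arc_bound.
  by move/(rbbP _ _ (@arc_bound _ A)) => h; apply/rainbowP.
by case: (_ && _).
Qed.

Lemma shift_sum (F : nat -> nat) j m :
  \sum_(x < j + m) (if j <= x then F (x - j) else 0) = \sum_(x < m) F x.
Proof.
rewrite -(big_mkord xpredT (fun x => if j <= x then F (x - j) else 0)).
rewrite (big_cat_nat (leq0n j) (leq_addr m j)) /=.
rewrite big_nat_cond big1 ?add0n; last first.
  by move=> i /andP[/andP[_ hi] _]; rewrite leqNgt hi.
rewrite -{1}[j]add0n big_addn addKn -(big_mkord xpredT).
by apply: eq_bigr => i _; rewrite leq_addl addnK.
Qed.

Lemma sum_eq1 N i (c : nat) : i < N -> \sum_(y < N) ((y == i :> nat) * c) = c.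
Proof.
move=> h; rewrite (bigD1 (Ordinal h)) //= eqxx mul1n big1 ?addn0 // => y hy.
have -> : (y == i :> nat) = false; last by [].
by apply/negbTE/negP => /eqP e; move/eqP: hy; apply; apply: val_inj.
Qed.

Section Rb.
Variables (RB RC : nat -> nat -> bool) (j m k : nat).
Hypothesis RBb : forall x y, RB x y -> x < j /\ y < j.
Hypothesis RCb : forall x y, RC x y -> x < m /\ y < m.
Hypothesis j0 : 0 < j.
Hypothesis k0 : 0 < k.
Hypothesis D : diagR (Rcat RB RC j).
Hypothesis HB : 1 < j -> RB 0 j.-1.
Local Notation RA := (Rcat RB RC j).

Lemma RAb x y : RA x y -> x < j + m /\ y < j + m.
Proof.
case/(Rcat_cases RBb j0) => [[_ [? ?]]|[a [b [-> -> /RCb [? ?]]]]]; lia.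
Qed.

Lemma rb_hi a b : rbP RA (j + a) (j + b) <-> rbP RC a b.
Proof.
split.
  case=> h H; rewrite Rcat_hi in h; split => // x' y' h' hx hy.
  have := H (j + x') (j + y'); rewrite Rcat_hi => /(_ h').
  by rewrite !leq_add2l => /(_ hx hy) [? ?]; lia.
case=> h H; split; first by rewrite Rcat_hi.
move=> x' y' /(Rcat_cases RBb j0) [[h' [hx' hy']]|[a' [b' [-> -> h']]]] hx hy.
  exfalso; lia.
by rewrite !leq_add2l in hx hy; have [-> ->] := H _ _ h' hx hy.
Qed.

Lemma rb_lo x y : x < j -> y < j -> (rbP RA x y <-> [/\ x = 0, y = j.-1 & 1 < j]).
Proof.
case: D => D1 D2 _ hx hy; split.
  case=> h H; have hxy := D1 _ _ h.
  have hj : 1 < j by lia.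
  have := H 0 j.-1 (embedB RC RBb (HB hj)) (leq0n _).
  by move=> /(_ ltac:(lia)) [? ?]; split.
case=> -> -> hj; split.
  by apply: (embedB RC RBb); apply: HB.
move=> x' y' h' hx' hy'.
have e : x' = 0 by lia.
have [e1 e2] := D2 _ _ _ _ (embedB RC RBb (HB hj)) h' ltac:(rewrite e eqxx //).
by split.
Qed.

Lemma term_eq x y :
  (rbb RA (j + m) x y && (y - x == k) : nat) =
  (x == 0) * ((y == j.-1) * (j == k.+1)) +
  (if j <= x then (if j <= y then
     (rbb RC m (x - j) (y - j) && ((y - j) - (x - j) == k) : nat) else 0) else 0).
Proof.
have rA := rbbP x y RAb.
case: (leqP j x) => hx.
  have -> : (x == 0) = false by lia.
  rewrite mul0n add0n.
  case: (leqP j y) => hy.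
    have rC := rbbP (x - j) (y - j) RCb.
    have -> : rbb RA (j + m) x y = rbb RC m (x - j) (y - j).
      have h := rb_hi (x - j) (y - j); rewrite !subnKC // in h.
      by apply/rA/rC; [exact: h.1 | exact: h.2].
    by have -> : (y - j) - (x - j) = y - x by lia.
  case: rA => // [[/(Rcat_cases RBb j0) [[_ [? ?]]|[a [b [? ? _]]]] _]]; lia.
rewrite addn0.
case: (ltnP y j) => hy.
  have -> : (x == 0) * ((y == j.-1) * (j == k.+1)) =
            [&& x == 0, y == j.-1 & j == k.+1] by do 3 case: eqP.
  congr nat_of_bool; apply/idP/idP.
    case/andP => /rA /(rb_lo hx hy) [-> -> hj] /eqP e; apply/and3P; split => //;
    apply/eqP; lia.
  case/and3P => /eqP ex /eqP ey /eqP ej; apply/andP; split; last by apply/eqP; lia.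
  by apply/rA/(rb_lo hx hy); split => //; lia.
have -> : (y == j.-1) = false by lia.
rewrite /= muln0.
case: rA => // [[/(Rcat_cases RBb j0) [[_ [? ?]]|[a [b [? ? _]]]] _]]; lia.
Qed.

Lemma cnt_cat :
  \sum_(x < j + m) \sum_(y < j + m) (rbb RA (j + m) x y && (y - x == k) : nat) =
  (j == k.+1) + \sum_(x < m) \sum_(y < m) (rbb RC m x y && (y - x == k) : nat).
Proof.
under eq_bigr => x _ do under eq_bigr => y _ do rewrite term_eq.
under eq_bigr => x _ do rewrite big_split /=.
rewrite big_split /=; congr (_ + _).
  under eq_bigr => x _ do rewrite -big_distrr /=.
  have h1 : j.-1 < j + m by lia.
  have h0 : 0 < j + m by lia.
  by rewrite (sum_eq1 _ h1) (sum_eq1 _ h0).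
under eq_bigr => x _.
  have -> : \sum_(y < j + m) (if j <= x then (if j <= y then
     (rbb RC m (x - j) (y - j) && ((y - j) - (x - j) == k) : nat) else 0) else 0)
   = if j <= x then \sum_(y < m) (rbb RC m (x - j) y && (y - (x - j) == k) : nat) else 0.
    case: ifP => _; last by rewrite big1.
    by rewrite (shift_sum (fun y => (rbb RC m (x - j) y && (y - (x - j) == k) : nat))).
  over.
by rewrite (shift_sum (fun x => \sum_(y < m) (rbb RC m x y && (y - x == k) : nat))).
Qed.

End Rb.
Definition concat n j m (B : {set 'I_j * 'I_j}) (C : {set 'I_m * 'I_m}) :
  {set 'I_n * 'I_n} := [set a : 'I_n * 'I_n | Rcat (arc B) (arc C) j a.1 a.2].
Definition split1 n j (A : {set 'I_n * 'I_n}) : {set 'I_j * 'I_j} :=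
  [set a : 'I_j * 'I_j | arc A a.1 a.2].
Definition split2 n j m (A : {set 'I_n * 'I_n}) : {set 'I_m * 'I_m} :=
  [set a : 'I_m * 'I_m | arc A (j + a.1) (j + a.2)].
Arguments concat n {j m} B C.
Arguments split1 {n} j A.
Arguments split2 {n} j m A.

Lemma Rcat_bound (RB RC : nat -> nat -> bool) j m x y :
  (forall x y, RB x y -> x < j /\ y < j) ->
  (forall x y, RC x y -> x < m /\ y < m) ->
  Rcat RB RC j x y -> x < j + m /\ y < j + m.
Proof.
move=> hB hC; rewrite /Rcat; case: ltnP => hy.
  by move/hB => [? ?]; lia.
by case/andP => hx /hC [? ?]; lia.
Qed.

Lemma arc_concat n j m (B : {set 'I_j * 'I_j}) (C : {set 'I_m * 'I_m}) : j + m <= n ->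
  arc (concat n B C) = Rcat (arc B) (arc C) j.
Proof.
move=> h; apply: functional_extensionality => x.
apply: functional_extensionality => y.
apply/arcP/idP => [[a]|hR]; first by rewrite inE => ha [<- <-].
have [bx by'] := Rcat_bound (@arc_bound _ B) (@arc_bound _ C) hR.
have bx' : x < n by lia.
have by'' : y < n by lia.
by exists (Ordinal bx', Ordinal by''); rewrite ?inE.
Qed.

Lemma arc_split1 n j (A : {set 'I_n * 'I_n}) x y :
  arc (split1 j A) x y = [&& x < j, y < j & arc A x y].
Proof.
apply/arcP/and3P => [[a]|[hx hy h]].
  by rewrite inE => ha [<- <-]; split; rewrite ?ltn_ord.
by exists (Ordinal hx, Ordinal hy); rewrite ?inE.
Qed.

Lemma arc_split2 n j m (A : {set 'I_n * 'I_n}) x y :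
  arc (split2 j m A) x y = [&& x < m, y < m & arc A (j + x) (j + y)].
Proof.
apply/arcP/and3P => [[a]|[hx hy h]].
  by rewrite inE => ha [<- <-]; split; rewrite ?ltn_ord.
by exists (Ordinal hx, Ordinal hy); rewrite ?inE.
Qed.

Lemma arc_set0 n x y : arc (set0 : {set 'I_n * 'I_n}) x y = false.
Proof. by apply/negbTE/negP => /arcP [a]; rewrite in_set0. Qed.

Definition fbs n (A : {set 'I_n * 'I_n}) : nat :=
  if [pick y : 'I_n | arc A 0 y] is Some y then (val y).+1 else 1.

Lemma fbs_spec n (A : {set 'I_n * 'I_n}) :
  (exists2 y, arc A 0 y & fbs A = y.+1) \/ (fbs A = 1 /\ forall y, ~~ arc A 0 y).
Proof.
rewrite /fbs; case: pickP => [y h|h]; first by left; exists y.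
right; split => // y; apply/negP => hh; have [_ b] := arc_bound hh.
by have := h (Ordinal b); rewrite /= hh.
Qed.

Lemma fbs_arc n (A : {set 'I_n * 'I_n}) y :
  diagR (arc A) -> arc A 0 y -> fbs A = y.+1.
Proof.
case=> _ D2 _ h; case: (fbs_spec A) => [[y' h' ->]|[_ H]].
  by have [_ ->] := D2 _ _ _ _ h' h ltac:(by rewrite eqxx).
by move: (H y); rewrite h.
Qed.

Lemma fbs_none n (A : {set 'I_n * 'I_n}) :
  (forall y, ~~ arc A 0 y) -> fbs A = 1.
Proof.
move=> H; case: (fbs_spec A) => [[y h _]|[-> _]] //.
by move: (H y); rewrite h.
Qed.

Lemma fbs_bound n (A : {set 'I_n * 'I_n}) : 0 < n -> 0 < fbs A <= n.
Proof.
move=> n0; case: (fbs_spec A) => [[y /arc_bound [_ h] ->]|[-> _]]; lia.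
Qed.

Lemma block n (A : {set 'I_n * 'I_n}) x y :
  diagR (arc A) -> arc A x y -> fbs A <= y -> fbs A <= x.
Proof.
case=> D1 D2 D3 h; case: (fbs_spec A) => [[y0 h0 ->]|[-> H]] hy.
  case: (ltnP y0 x) => // hx.
  case: (posnP x) => [x0|xpos].
    by subst x; have [_ e] := D2 _ _ _ _ h0 h ltac:(by rewrite eqxx); lia.
  case: (eqVneq x y0) => [e|ne].
    by have [e1 _] := D2 _ _ _ _ h0 h ltac:(rewrite e eqxx !orbT //); lia.
  have := D3 _ _ _ _ h0 h; rewrite xpos /=.
  have -> : x < y0 by lia.
  by have -> : y0 < y by lia.
case: (posnP x) => [x0|//]; subst x.
by move: (H y); rewrite h.
Qed.

Lemma concat_split n j (A : {set 'I_n * 'I_n}) :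
  diagR (arc A) -> fbs A = j -> j <= n ->
  concat n (split1 j A) (split2 j (n - j) A) = A.
Proof.
move=> D hf hj; have [D1 _ _] := D.
apply: arc_ext => x y; rewrite arc_concat; last by lia.
rewrite /Rcat arc_split1 arc_split2; case: (ltnP y j) => hy.
  apply/and3P/idP => [[_ _ ->] //|h]; have := D1 _ _ h; split => //; lia.
apply/idP/idP => [/andP[hx /and3P[_ _]]|h]; first by rewrite !subnKC.
have [bx by'] := arc_bound h.
have hx : j <= x by rewrite -hf; apply: (block D h); rewrite hf.
apply/andP; split => //; apply/and3P; split; [lia|lia|by rewrite !subnKC].
Qed.

Lemma split_concat n j m (B : {set 'I_j * 'I_j}) (C : {set 'I_m * 'I_m}) :
  j + m <= n -> (split1 j (concat n B C), split2 j m (concat n B C)) = (B, C).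
Proof.
move=> h; congr pair; apply: arc_ext => x y.
  rewrite arc_split1 arc_concat // /Rcat; case: (ltnP y j) => hy /=.
    by apply/andP/idP => [[_ ->] //|hb]; split => //; have [? _] := arc_bound hb.
  by rewrite andbF; apply/esym/negbTE/negP => /arc_bound [_]; lia.
rewrite arc_split2 arc_concat // Rcat_hi.
by apply/and3P/idP => [[_ _ ->] //|hc]; have [? ?] := arc_bound hc; split.
Qed.
Lemma sum_part (T : finType) (P : pred T) (g : T -> nat) (F : T -> {poly int}) N :
  (forall x, P x -> g x < N) ->
  (\sum_(x | P x) F x = \sum_(b < N) \sum_(x | P x && (g x == b)) F x)%R.
Proof.
move=> H.
under [RHS]eq_bigr => b _ do rewrite big_mkcondr /=.
rewrite exchange_big /=; apply: eq_bigr => x Px.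
rewrite -big_mkcond /=.
rewrite (eq_bigl (fun b : 'I_N => b == g x :> nat)); last by move=> b; rewrite eq_sym.
by rewrite (big_ord1_eq _ (fun _ => F x)) H.
Qed.

Section Main.
Variables lam r k : nat.
Hypothesis hk : 0 < k.

Lemma cat_good n j m (B : {set 'I_j * 'I_j}) (C : {set 'I_m * 'I_m}) :
  0 < j -> j + m <= n ->
  (sec_str lam r (concat n B C) && (fbs (concat n B C) == j)) =
  (sec_str lam r B && irreducible B) && sec_str lam r C.
Proof.
move=> j0 hn; apply/idP/idP.
  case/andP => /sec_strP; rewrite arc_concat // => hs /eqP hf.
  have [sB sC] := secR_cat_l (@arc_bound _ B) j0 hs.
  have sB' : sec_str lam r B by apply/sec_strP.
  have sC' : sec_str lam r C by apply/sec_strP.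
  rewrite sB' sC' andbT /=.
  case: (fbs_spec (concat n B C)) => [[y h e]|[e H]].
    rewrite /irreducible; apply/orP; right.
    have ey : y = j.-1 by lia.
    subst y; move: h; rewrite arc_concat // /Rcat.
    by have -> : j.-1 < j by lia.
  have j1 : j = 1 by lia.
  subst j; rewrite /irreducible /=; apply/orP; left.
  apply/eqP/setP => -[a b]; rewrite in_set0 -arc_in /=.
  rewrite (ord1 a) (ord1 b) /=.
  case: sB => [[B1 _ _] _ _].
  by apply/negbTE/negP => /B1.
case/andP => /andP[/sec_strP sB iB] /sec_strP sC.
have hs := secR_cat_r (@arc_bound _ B) j0 sB sC.
apply/andP; split; first by apply/sec_strP; rewrite arc_concat.
case: (hs) => D _ _.
case/orP: iB => [/andP[/eqP j1 /eqP B0]|h].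
  subst j; subst B; rewrite fbs_none // => y.
  rewrite arc_concat // /Rcat arc_set0.
  by case: (y < 1).
rewrite (@fbs_arc _ _ j.-1) ?prednK //; first by rewrite arc_concat.
rewrite arc_concat // /Rcat.
by have -> : j.-1 < j by lia.
Qed.

Lemma nr_concat n j m (B : {set 'I_j * 'I_j}) (C : {set 'I_m * 'I_m}) :
  0 < j -> j + m = n -> sec_str lam r B -> irreducible B -> sec_str lam r C ->
  nrainbows k (concat n B C) = (j == k.+1) + nrainbows k C.
Proof.
move=> j0 e /sec_strP sB iB /sec_strP sC; subst n.
have hs := secR_cat_r (@arc_bound _ B) j0 sB sC.
case: hs => D _ _.
rewrite !nr_sum arc_concat //.
apply: cnt_cat => //; try exact: arc_bound.
move=> hj; case/orP: iB => [/andP[/eqP j1 _]|//]; lia.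
Qed.

Definition sw n : {poly int} :=
  (\sum_(A : {set 'I_n * 'I_n} | sec_str lam r A) 'X^(nrainbows k A))%R.
Definition wt j : {poly int} := ((f_count lam r j)%:R * 'X^(j == k.+1))%R.

Lemma block_sum i j : 0 < j -> j <= i ->
  (\sum_(A : {set 'I_i * 'I_i} | sec_str lam r A && (fbs A == j))
      ('X^(nrainbows k A) : {poly int}) = wt j * sw (i - j))%R.
Proof.
move=> j0 ji.
have hn : j + (i - j) <= i by lia.
rewrite (reindex_onto
  (fun p : {set 'I_j * 'I_j} * {set 'I_(i - j) * 'I_(i - j)} => concat i p.1 p.2)
  (fun A => (split1 j A, split2 j (i - j) A))) /=; last first.
  by move=> A /andP[/sec_strP [D _ _] /eqP fA]; apply: concat_split.
rewrite (eq_bigl (fun p => (sec_str lam r p.1 && irreducible p.1) && sec_str lam r p.2));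
  last by move=> [B C] /=; rewrite split_concat // eqxx andbT cat_good.
rewrite (eq_bigr (fun p => ('X^(j == k.+1) * 'X^(nrainbows k p.2))%R)); last first.
  move=> [B C] /= /andP[/andP[sB iB] sC]; rewrite (@nr_concat i) ?exprD //; lia.
rewrite -(pair_big (fun B => sec_str lam r B && irreducible B) (fun C => sec_str lam r C)
   (fun B C => ('X^(j == k.+1) * 'X^(nrainbows k C))%R)) /=.
rewrite /wt /sw.
have -> : ((f_count lam r j)%:R : {poly int})%R =
   (\sum_(B : {set 'I_j * 'I_j} | sec_str lam r B && irreducible B) 1)%R.
  by rewrite /f_count -sumr_const; apply: eq_bigl => B; rewrite inE.
rewrite -mulrA big_distrl /=; apply: eq_bigr => B _.
by rewrite mul1r big_distrr.
Qed.

Lemma f_count0 : f_count lam r 0 = 0.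
Proof.
rewrite /f_count; apply/eqP; rewrite cards_eq0; apply/eqP/setP => A.
rewrite !inE /irreducible /=.
have -> : arc A 0 0 = false by apply/negbTE/negP => /arc_bound [].
by rewrite andbF.
Qed.

Lemma wt0 : wt 0 = 0%R.
Proof. by rewrite /wt f_count0 mul0r. Qed.

Lemma sw_rec i : 0 < i -> sw i = (\sum_(b < i.+1) wt b * sw (i - b))%R.
Proof.
move=> i0; rewrite /sw (@sum_part _ _ (@fbs i) _ i.+1); last first.
  by move=> A _; have := fbs_bound A i0; lia.
apply: eq_bigr => -[b hb] _ /=.
case: (posnP b) => [b0|bpos].
  subst b; rewrite wt0 mul0r big_pred0 // => A.
  have hb2 := fbs_bound A i0; have -> : (fbs A == 0) = false by lia.
  by rewrite andbF.
by rewrite block_sum.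
Qed.

Lemma sw0 : sw 0 = 1%R.
Proof.
rewrite /sw (big_pred1 set0); last first.
  move=> A; have -> : A = set0 by apply/setP => -[[x hx] y]; exfalso; by rewrite ltn0 in hx.
  rewrite /= eqxx; apply/sec_strP; split; [split| |].
  - by move=> x y; rewrite arc_set0.
  - by move=> x y x' y'; rewrite arc_set0.
  - by move=> x y x' y'; rewrite arc_set0.
  - by move=> x y; rewrite arc_set0.
  - by move=> x y s /stack_head; rewrite arc_set0.
by rewrite nr_sum big_ord0 expr0.
Qed.

Lemma nr_le n (A : {set 'I_n * 'I_n}) : diagR (arc A) -> nrainbows k A <= n.
Proof.
case=> _ D2 _; rewrite /nrainbows.
set S := [set a in A | _].
have inj : {in S &, injective (fun a : 'I_n * 'I_n => a.1)}.
  move=> a a'; rewrite !inE => /andP[aA _] /andP[a'A _] e.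
  have ha : arc A a.1 a.2 by rewrite arc_in.
  have ha' : arc A a'.1 a'.2 by rewrite arc_in.
  have [e1 e2] := D2 _ _ _ _ ha ha' ltac:(by rewrite e eqxx).
  case: a a' e1 e2 {aA a'A ha ha' e} => [a1 a2] [b1 b2] /= e1 e2.
  by rewrite (val_inj e1) (val_inj e2).
rewrite -(card_in_imset inj); apply: leq_trans (max_card _) _.
by rewrite card_ord.
Qed.

Lemma S_coef N n : n <= N -> ((S_trunc lam r k N)`_n = sw n)%R.
Proof.
move=> hn; rewrite /S_trunc coef_sum.
under eq_bigr => n' _.
  rewrite coef_sum.
  under eq_bigr => b _ do rewrite coefCM coefXn.
  rewrite -big_distrl /=.
  over.
have hn' : n < N.+1 by [].
rewrite (bigD1 (Ordinal hn')) //= eqxx mulr1 [X in (_ + X)%R]big1 ?addr0; last first.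
  move=> n' hne; have -> : (n == n' :> nat) = false; last by rewrite mulr0.
  by apply/negbTE/negP => /eqP e; move/eqP: hne; apply; apply: val_inj.
rewrite /sw (@sum_part _ _ (nrainbows k) _ n.+1); last first.
  by move=> A /sec_strP [D _ _]; have := nr_le D.
apply: eq_bigr => b _.
rewrite /s_count scaler_nat -sumr_const.
apply: eq_big => [A|A]; first by rewrite inE.
by rewrite inE => /andP[_ /eqP ->].
Qed.

End Main.

Local Open Scope ring_scope.

Lemma G_coef lam r k N m : (m <= N)%N ->
  ((1 - F_trunc lam r N - (uvar - 1) * (f_count lam r k.+1)%:R * 'X^(k.+1))`_m
   = (m == 0%N)%:R - wt lam r k m)%R.
Proof.
move=> hm; rewrite !coefB coef1.
have eF : ((F_trunc lam r N)`_m =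
           if (0 < m)%N then ((f_count lam r m)%:R : {poly int}) else 0)%R.
  rewrite /F_trunc coef_sum.
  under eq_bigr => m' _ do rewrite -polyC_natr coefCM coefXn.
  rewrite (eq_bigr (fun m' => if m' == m then ((f_count lam r m')%:R : {poly int}) else 0)%R);
    last by move=> m' _; rewrite eq_sym mulr_natr; case: eqP => _ /=; rewrite ?mulr1n ?mulr0n.
  by rewrite -big_mkcond big_nat1_eq /= ltnS hm andbT.
have eL : (((uvar - 1) * (f_count lam r k.+1)%:R * 'X^(k.+1))`_m =
           ('X - 1) * (f_count lam r k.+1)%:R * (m == k.+1)%:R)%R.
  by rewrite /uvar -polyC_natr -polyC1 -polyCB -polyCM coefCM coefXn.
rewrite eF eL /wt.
case: m hm {eF eL} => [|m] hm /=.
  by rewrite f_count0 /=; ring.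
case: (eqVneq m k) => [->|ne].
  rewrite eqxx /=.
  ring.
by rewrite eqSS (negbTE ne) /=; ring.
Qed.

Theorem lemma2 (lam r k : nat) (hlam : (0 < lam)%N) (hr : (0 < r)%N)
    (hk : (0 < k)%N) :
  forall N i : nat, (i <= N)%N ->
    ((S_trunc lam r k N *
       (1 - F_trunc lam r N
          - (uvar - 1) * (f_count lam r k.+1)%:R * 'X^(k.+1)))`_i
    = (i == 0%N)%:R)%R.
Proof.
move=> N i hi.
rewrite coefM.
rewrite (eq_bigr (fun j : 'I_i.+1 =>
   sw lam r k j * ((i - j == 0)%N%:R - wt lam r k (i - j)))%R); last first.
  by move=> j _; have hj := ltn_ord j; rewrite S_coef ?G_coef //; lia.
under eq_bigr => j _ do rewrite mulrBr.
rewrite sumrB.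
rewrite big_ord_recr /= subnn eqxx mulr1.
rewrite big1 ?add0r; last first.
  move=> j _; have := ltn_ord j.
  by move=> hj; rewrite (_ : (i - j == 0)%N = false) ?mulr0 //; lia.
case: (posnP i) => [i0|ipos].
  by subst i; rewrite big_ord1 /= wt0 mulr0 subr0 sw0.
have -> : (\sum_(j < i.+1) sw lam r k j * wt lam r k (i - j) = sw lam r k i)%R.
  rewrite (sw_rec lam r hk ipos).
  rewrite -(big_mkord xpredT (fun j => sw lam r k j * wt lam r k (i - j))%R).
  rewrite -(big_mkord xpredT (fun b => wt lam r k b * sw lam r k (i - b))%R).
  rewrite big_nat_rev /=; apply: eq_big_nat => j hj.
  rewrite add0n subSS subKn; first by rewrite mulrC.
  by move: hj; lia.
by rewrite subrr.
Qed.
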